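(* Let $X$ be a topological space and let $K_n\subseteq\mathbb R^X$ for $n\in\mathbb N$. Let $\Gamma=\bigcup_{n\in\mathbb N}K_n$ and suppose that for each $n\in\mathbb N$ the set $A_n$ of points $x\in X$ at which $K_n$ is equicontinuous is a residual subset of $X$. Then $X$ is conditionally $\sigma^*_{C(X_\Gamma)}$-$\alpha$-favorable. In particular, $X$ is conditionally $\sigma^*_\Gamma$-$\alpha$-favorable.
   Context: A family $K\subseteq\mathbb R^X$ is equicontinuous at $x\in X$ if for every $\varepsilon>0$ there is a neighborhood $U$ of $x$ such that $|g(y)-g(x)|<\varepsilon$ for all $y\in U$ and all $g\in K$. A set is residual if its complement is of first category. $X_\Gamma$ denotes the set $X$ equipped with the topology generated by the functions in $\Gamma$ (the weakest topology making each $g\in\Gamma$ continuous), and $C(X_\Gamma)$ is the set of real-valued continuous functions on $X_\Gamma$, viewed as a subset of $\mathbb R^X$. For $\Lambda\subseteq\mathbb R^X$, the game $\mathcal J^*_\Lambda$ on $X$: players $\beta$ and $\alpha$ alternately choose nonempty open subsets of $X$, $V_0\supseteq U_0\supseteq V_1\supseteq U_1\supseteq\cdots$, with $\beta$ choosing the $V_n$ (starting with $V_0$) and $\alpha$ the $U_n$. Player $\alpha$ wins the play $((V_n,U_n))_n$ iff for every sequence $(a_n)$ with $a_n\in U_n$ for all $n$ and every $g\in\Lambda$ there exists $t\in\bigcap_n U_n$ with $g(t)\in\overline{\{g(a_n):n\in\mathbb N\}}$. $X$ is conditionally $\sigma^*_\Lambda$-$\alpha$-favorable if $\alpha$ has a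 strategy $\tau$ such that every play compatible with $\tau$ satisfying $\bigcap_n U_n\neq\emptyset$ is won by $\alpha$. *)

(* Defs.v *)
From HB Require Import structures.
From mathcomp Require Import all_boot all_order all_algebra.
From mathcomp Require Import all_classical all_reals topology normedtype.
Set Implicit Arguments. Unset Strict Implicit. Unset Printing Implicit Defensive.
Import Order.TTheory GRing.Theory Num.Theory.
Import numFieldNormedType.Exports.
Local Open Scope classical_set_scope.
Local Open Scope ring_scope.

Section Defs.
Context {X : topologicalType} {R : realType}.

Definition equicontinuous_at (K : set (X -> R)) (x : X) : Prop :=
  forall eps : R, 0 < eps -> exists U : set X, nbhs x U /\
    forall y g, U y -> K g -> `|g y - g x| < eps.

Definition nowhere_dense (A : set X) : Prop := (closure A)^° = set0.

Definition first_category (A : set X) : Prop :=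
  exists F : nat -> set X, (forall n, nowhere_dense (F n)) /\
    A `<=` \bigcup_n F n.

Definition residual (A : set X) : Prop := first_category (~` A).

Definition is_topology (O : set (set X)) : Prop :=
  O setT /\ (forall A B, O A -> O B -> O (A `&` B)) /\
  (forall F : set (set X), F `<=` O -> O (\bigcup_(A in F) A)).

(** open sets of X_Gamma: the weakest topology making every g in Gamma continuous *)
Definition weak_open (Gamma : set (X -> R)) (W : set X) : Prop :=
  forall O : set (set X), is_topology O ->
    (forall g (U : set R), Gamma g -> open U -> O (g @^-1` U)) -> O W.

Definition C_weak (Gamma : set (X -> R)) : set (X -> R) :=
  [set f | forall U : set R, open U -> weak_open Gamma (f @^-1` U)].

(** The game J*_Lambda.  A strategy for alpha maps the history
    [:: V_0; U_0; ...; U_(n-1); V_n] to alpha's answer U_n. *)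
Definition strategy := seq (set X) -> set X.

Definition history (V U : nat -> set X) (n : nat) : seq (set X) :=
  flatten [seq [:: V i; U i] | i <- iota 0 n] ++ [:: V n].

Definition legal_strategy (tau : strategy) : Prop :=
  forall (h : seq (set X)) (V : set X), open V -> V !=set0 ->
    [/\ open (tau (rcons h V)), tau (rcons h V) !=set0 & tau (rcons h V) `<=` V].

Definition compatible_play (tau : strategy) (V U : nat -> set X) : Prop :=
  [/\ forall n, open (V n) /\ V n !=set0,
      forall n, V n.+1 `<=` U n &
      forall n, U n = tau (history V U n)].

Definition alpha_wins (Lambda : set (X -> R)) (U : nat -> set X) : Prop :=
  forall a : nat -> X, (forall n, U n (a n)) ->
  forall g, Lambda g ->
    exists t, (\bigcap_n U n) t /\ closure (range (g \o a)) (g t).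

Definition cond_sigma_star_alpha_favorable (Lambda : set (X -> R)) : Prop :=
  exists tau : strategy, legal_strategy tau /\
    forall V U, compatible_play tau V U -> \bigcap_n U n !=set0 ->
      alpha_wins Lambda U.

End Defs.

(* Main.v *)
Require Import Defs.
From mathcomp Require Import all_boot all_order all_algebra.
From mathcomp Require Import all_classical all_reals topology normedtype.
Import Order.TTheory GRing.Theory Num.Theory.
Import numFieldNormedType.Exports.
Local Open Scope classical_set_scope.

Section Proof.
Variables (X : topologicalType) (R : realType) (K : nat -> set (X -> R)).
Variable F : nat -> nat -> set X.
Hypothesis Fnd : forall n k, nowhere_dense (F n k).

Definition dlt (j : nat) : R := (j.+1%:R)^-1%R.

Definition osc n j (W : set X) := forall y z g, W y -> W z -> K n g ->
  (`|g y - g z| <= dlt j)%R.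

Definition code (m : nat) : nat * nat * nat := odflt (0, 0, 0)%N (unpickle m).

Definition W0 m (V : set X) := V `&` ~` closure (F (code m).1.1 (code m).1.2).

Definition good m V (U' : set X) :=
  [/\ open U', U' !=set0, U' `<=` W0 m V & osc (code m).1.1 (code m).2 U'].

Definition step m V : set X :=
  match pselect (exists U', good m V U') with
  | left H => projT1 (cid H)
  | right _ => W0 m V end.

Definition tau : seq (set X) -> set X := fun s => step (size s)./2 (last set0 s).

Lemma W0_open m V : open V -> open (W0 m V).
Proof. move=> oV; apply: openI => //; rewrite openC; exact: closed_closure. Qed.

Lemma W0_ne m V : open V -> V !=set0 -> W0 m V !=set0.
Proof.
move=> oV [x Vx]; apply/set0P/negP => /eqP W0e.
have sub : V `<=` closure (F (code m).1.1 (code m).1.2).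
  move=> y Vy; apply: contrapT => ny.
  have : W0 m V y by split.
  by rewrite W0e.
have := Fnd (code m).1.1 (code m).1.2; rewrite /nowhere_dense => e.
have : (closure (F (code m).1.1 (code m).1.2))° x.
  rewrite /interior /=; apply: filterS sub _.
  by apply: open_nbhs_nbhs; split.
by rewrite e.
Qed.

Lemma step_prop m V : open V -> V !=set0 ->
  [/\ open (step m V), step m V !=set0 & step m V `<=` W0 m V].
Proof.
move=> oV nV; rewrite /step; case: pselect => [H|_].
  by move: (projT2 (cid H)) => [].
split; [exact: W0_open | exact: W0_ne | by []].
Qed.

Lemma tau_legal : legal_strategy tau.
Proof.
move=> h V oV nV; rewrite /tau last_rcons.
have [o n s] := step_prop (size (rcons h V))./2 V oV nV.
split => //; apply: subset_trans s _; by move=> y [].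
Qed.

Lemma size_fl (V U : nat -> set X) m n :
  size (flatten [seq [:: V i; U i] | i <- iota m n]) = n.*2.
Proof. by elim: n m => [|n IH] m //=; rewrite IH. Qed.

Lemma tau_hist V U n : tau (history V U n) = step n (V n).
Proof.
rewrite /tau /history cats1 last_rcons size_rcons size_fl.
by rewrite /= uphalf_double.
Qed.

Section Play.
Variables (V U : nat -> set X).
Hypothesis cp : compatible_play tau V U.

Lemma Ueq n : U n = step n (V n).
Proof. by case: cp => _ _ ->; rewrite tau_hist. Qed.

Lemma U_W0 n : U n `<=` W0 n (V n).
Proof. case: cp => h _ _; case: (h n) => o ne; rewrite Ueq; by case: (step_prop n (V n) o ne). Qed.

Lemma U_V n : U n `<=` V n.
Proof. by move=> x /U_W0 []. Qed.

Lemma U_dec m m' : (m <= m')%N -> U m' `<=` U m.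
Proof.
move=> /subnK <-; elim: (m' - m)%N => [|d IH] //=.
rewrite addSn; apply: subset_trans IH.
case: cp => _ h _; apply: subset_trans (h _); exact: U_V.
Qed.
End Play.

Section Win.
Hypothesis hA : forall n, ~` [set x | equicontinuous_at (K n) x] `<=` \bigcup_k F n k.

Lemma conv V U t (a : nat -> X) : compatible_play tau V U ->
  (\bigcap_n U n) t -> (forall n, U n (a n)) ->
  forall n g, K n g -> forall e : R, (0 < e)%R ->
  exists M, forall m, (M <= m)%N -> (`|g (a m) - g t| < e)%R.
Proof.
move=> cp tU aU.
have tF : forall n k, ~ closure (F n k) t.
  move=> n k; have := U_W0 _ _ cp _ _ (tU (pickle (n, k, 0%N)) I).
  by rewrite /W0 /code pickleK /= => -[].
have tA : forall n, equicontinuous_at (K n) t.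
  move=> n; apply: contrapT => nA; have [k _ Fk] := hA n t nA.
  by apply: (tF n k); apply: subset_closure.
move=> n g Kg e e0.
have [j hj] := ltr_add_invr e0; rewrite add0r in hj.
set m := pickle (n, 0%N, j).
have gd : exists U', good m (V m) U'.
  have dj : (0 < dlt j / 2)%R by rewrite divr_gt0 // /dlt invr_gt0 ltr0n.
  have [W [nW hW]] := tA n (dlt j / 2)%R dj.
  exists (W° `&` W0 m (V m)); split.
  - apply: openI; first exact: open_interior.
    apply: W0_open; by case: cp => h _ _; case: (h m).
  - exists t; split; first exact: nW.
    exact: (U_W0 _ _ cp m t (tU m I)).
  - by move=> y [].
  - rewrite /m /code pickleK /= => y z h Wy Wz Kh.
    have Wy' := interior_subset Wy.1; have Wz' := interior_subset Wz.1.
    apply: le_trans (ler_distD (h t) _ _) _.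
    rewrite (distrC (h t)) (splitr (dlt j)) lerD //; apply: ltW; exact: hW.
have oU : osc n j (U m).
  rewrite (Ueq _ _ cp) /step; case: pselect => [H|/(_ gd)//].
  by move: (projT2 (cid H)) => [_ _ _]; rewrite /m /code pickleK.
exists m => m' mm'.
have := oU (a m') t g (U_dec _ _ cp _ _ mm' _ (aU m')) (tU m I) Kg.
by move=> h; apply: le_lt_trans hj.
Qed.

Lemma weak_conv (Gamma : set (X -> R)) (t : X) (a : nat -> X) :
  Gamma `<=` \bigcup_n K n ->
  (forall n g, K n g -> forall e : R, (0 < e)%R ->
    exists M, forall m, (M <= m)%N -> (`|g (a m) - g t| < e)%R) ->
  forall f, C_weak Gamma f -> closure (range (f \o a)) (f t).
Proof.
move=> sG hc f Cf B /nbhs_ballP [e /= e0 sB].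
pose O := [set W : set X | W t -> exists M, forall m, (M <= m)%N -> W (a m)].
have tO : is_topology O.
  split; [|split].
  - by move=> _; exists 0%N.
  - move=> A B' hA' hB [At Bt]; have [M1 h1] := hA' At; have [M2 h2] := hB Bt.
    exists (maxn M1 M2) => m hm; split.
    + by apply: h1; apply: leq_trans hm; exact: leq_maxl.
    + by apply: h2; apply: leq_trans hm; exact: leq_maxr.
  - move=> G sGO [A GA At]; have [M h] := sGO A GA At.
    by exists M => m hm; exists A => //; apply: h.
have gen : forall g (U : set R), Gamma g -> open U -> O (g @^-1` U).
  move=> g U Gg oU Ut; have [n _ Kg] := sG g Gg.
  have /nbhs_ballP [d /= d0 sU] : nbhs (g t) U by apply: open_nbhs_nbhs.
  have [M hM] := hc n g Kg d d0.
  exists M => m hm; apply: sU; rewrite -ball_normE /= distrC; exact: hM.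
have := Cf _ (ball_open (f t) e) O tO gen (ballxx _ e0).
move=> [M hM]; exists (f (a M)); split; first by exists M.
by apply: sB; apply: hM.
Qed.
End Win.
End Proof.

Theorem proposition2p2 (X : topologicalType) (R : realType)
    (K : nat -> set (X -> R)) :
  let Gamma := \bigcup_n K n in
  (forall n, residual [set x : X | equicontinuous_at (K n) x]) ->
  cond_sigma_star_alpha_favorable (C_weak Gamma) /\
  cond_sigma_star_alpha_favorable Gamma.
Proof.
move=> Gamma hres.
have hres' : forall n, exists F : nat -> set X,
  (forall k, nowhere_dense (F k)) /\ ~` [set x | equicontinuous_at (K n) x] `<=` \bigcup_k F k.
  exact: hres.
have [F hF] := choice hres'.
have Fnd : forall n k, nowhere_dense (F n k) by move=> n k; case: (hF n).
have hA : forall n, ~` [set x | equicontinuous_at (K n) x] `<=` \bigcup_k F n k by move=> n; case: (hF n).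
have CG : Gamma `<=` C_weak Gamma.
  by move=> g Gg U oU O _ gen; apply: gen.
have main : cond_sigma_star_alpha_favorable (C_weak Gamma).
  exists (@tau X R K F); split; first exact: (@tau_legal X R K F Fnd).
  move=> V U cp [t tU] a aU f Cf; exists t; split => //.
  apply: (@weak_conv X R K Gamma t a (@subset_refl _ _) _ f Cf).
  move=> n g Kg e e0; exact: (@conv X R K F Fnd hA V U t a cp tU aU n g Kg e e0).
split => //.
case: main => tau0 [l w]; exists tau0; split => // V U cp ne a aU g Gg.
exact: w cp ne a aU g (CG g Gg).
Qed.
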